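(* Let $1<w\le 2$, $h>1$, $k\ge 2$, and let $\frac12\le y_1<\dots<y_n\le h-\frac12$ be uniformly spaced with $y_{i+1}-y_i=\frac1k$ for all $i$. Let $(\mathbf x,\prec)$ be a $\frac1k$-reasonable layout of this instance. For every bad square $s_i$ that is not a standard bad square, at least one of its neighbours $s_{i-1}$, $s_{i+1}$ (those that exist) is a standard bad square.
   Context: The instance is the strip $T=[0,w]\times[0,h]$ with the given $y_i$. A layout is a pair $(\mathbf x,\prec)$ where $\mathbf x=(x_1,\dots,x_n)$ with $x_i\in[\frac12,w-\frac12]$, and $\prec$ is a total order on the squares $s_1,\dots,s_n$, where $s_i$ is the closed axis-parallel unit square with centre $(x_i,y_i)$. If $s_i\prec s_j$ we say $s_j$ is in front of $s_i$ and $s_i$ is behind $s_j$. A point $p$ on the boundary of $s_i$ is visible if every square $s_j$ ($j\neq i$) containing $p$ is behind $s_i$, and covered otherwise. The visible perimeter of $s_i$ is the total length of its visible boundary points; the gap of $s_i$ is its visible perimeter minus $2$, the gap of a layout is the minimum gap of its squares, and a layout is $\varepsilon$-reasonable if its gap is larger than $\varepsilon$. A bad square is a square with at least two of its four corners covered; a standard bad square is a bad square one of whose vertical sides is entirely covered. *)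

(* Defs.v *)
From HB Require Import structures.
From mathcomp Require Import all_boot all_order all_algebra.
From mathcomp Require Import all_classical all_reals all_analysis.
Set Implicit Arguments. Unset Strict Implicit. Unset Printing Implicit Defensive.
Import Order.TTheory GRing.Theory Num.Theory.
Local Open Scope classical_set_scope.
Local Open Scope ring_scope.

Section Layouts.
Variables (R : realType) (n : nat).
(* centres: x i (chosen), y i (given); the total order is encoded by an
   injective rank function: s_i ≺ s_j  iff  rank i < rank j. *)
Variables (x y : 'I_n -> R) (rank : 'I_n -> nat).

Definition in_square (i : 'I_n) (p : R * R) : Prop :=
  `|p.1 - x i| <= 2^-1 /\ `|p.2 - y i| <= 2^-1.

Definition behind (i j : 'I_n) : Prop := (rank i < rank j)%N.

Definition visible (i : 'I_n) (p : R * R) : Prop :=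
  forall j : 'I_n, j != i -> in_square j p -> behind j i.

Definition covered (i : 'I_n) (p : R * R) : Prop := ~ visible i p.

Definition left_side  (i : 'I_n) (t : R) : R * R := (x i - 2^-1, y i - 2^-1 + t).
Definition right_side (i : 'I_n) (t : R) : R * R := (x i + 2^-1, y i - 2^-1 + t).
Definition bottom_side (i : 'I_n) (t : R) : R * R := (x i - 2^-1 + t, y i - 2^-1).
Definition top_side   (i : 'I_n) (t : R) : R * R := (x i - 2^-1 + t, y i + 2^-1).

Definition visible_length (side : R -> R * R) (i : 'I_n) : \bar R :=
  lebesgue_measure [set t : R | 0 <= t <= 1 /\ visible i (side t)].

Definition visible_perimeter (i : 'I_n) : \bar R :=
  (visible_length (left_side i) i + visible_length (right_side i) i +
   visible_length (bottom_side i) i + visible_length (top_side i) i)%E.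

Definition gap (i : 'I_n) : \bar R := (visible_perimeter i - 2%:E)%E.

(* the gap of the layout (minimum gap over all squares) is larger than eps *)
Definition reasonable (eps : R) : Prop :=
  forall i : 'I_n, (eps%:E < gap i)%E.

Definition corner (i : 'I_n) (c : 'I_4) : R * R :=
  (if (val c < 2)%N then x i - 2^-1 else x i + 2^-1,
   if odd (val c) then y i + 2^-1 else y i - 2^-1).

Definition bad_square (i : 'I_n) : Prop :=
  exists c1 c2 : 'I_4, c1 != c2 /\ covered i (corner i c1) /\ covered i (corner i c2).

Definition standard_bad_square (i : 'I_n) : Prop :=
  bad_square i /\
  ((forall t : R, 0 <= t <= 1 -> covered i (left_side i t)) \/
   (forall t : R, 0 <= t <= 1 -> covered i (right_side i t))).

End Layouts.

(* Main.v *)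
Require Import Defs.
From HB Require Import structures.
From mathcomp Require Import all_boot all_order all_algebra.
From mathcomp Require Import all_classical all_reals all_analysis.
From mathcomp Require Import ring lra zify.
Import Order.TTheory GRing.Theory Num.Theory.
Local Open Scope classical_set_scope.
Local Open Scope ring_scope.

Lemma leb_itv (R : realType) (P : R -> Prop) (a b : R) :
  a <= b -> (forall t, P t -> a <= t <= b) ->
  (lebesgue_measure [set t | P t] <= (b - a)%:E)%E.
Proof.
move=> ab H.
have sub : [set t | P t] `<=` [set` `[a, b]] by move=> t /H; rewrite /= in_itv.
have L : (lebesgue_measure [set t | P t] <= lebesgue_measure [set` `[a, b]])%E
  := le_outer_measure lebesgue_measure _ _ sub.
apply: (le_trans L).
rewrite lebesgue_measure_itv /= lte_fin.
case: ltP => ? /=; first by rewrite -EFinB.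
by rewrite lee_fin subr_ge0.
Qed.

Lemma reas4 (R : realType) n (x y : 'I_n -> R) rank (eps : R) (i : 'I_n)
  (aL bL aR bR aB bB aT bT : R) :
  reasonable x y rank eps ->
  (forall t : R, 0 <= t <= 1 -> visible x y rank i (left_side x y i t) -> aL <= t <= bL) ->
  (forall t : R, 0 <= t <= 1 -> visible x y rank i (right_side x y i t) -> aR <= t <= bR) ->
  (forall t : R, 0 <= t <= 1 -> visible x y rank i (bottom_side x y i t) -> aB <= t <= bB) ->
  (forall t : R, 0 <= t <= 1 -> visible x y rank i (top_side x y i t) -> aT <= t <= bT) ->
  aL <= bL -> aR <= bR -> aB <= bB -> aT <= bT ->
  eps + 2 < (bL - aL) + (bR - aR) + (bB - aB) + (bT - aT).
Proof.
move=> /(_ i) Hr VL VR VB VT hL hR hB hT.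
have EL := @leb_itv R (fun t => 0 <= t <= 1 /\ visible x y rank i (left_side x y i t)) _ _ hL (fun t Ht => VL t Ht.1 Ht.2).
have ER := @leb_itv R (fun t => 0 <= t <= 1 /\ visible x y rank i (right_side x y i t)) _ _ hR (fun t Ht => VR t Ht.1 Ht.2).
have EB := @leb_itv R (fun t => 0 <= t <= 1 /\ visible x y rank i (bottom_side x y i t)) _ _ hB (fun t Ht => VB t Ht.1 Ht.2).
have ET := @leb_itv R (fun t => 0 <= t <= 1 /\ visible x y rank i (top_side x y i t)) _ _ hT (fun t Ht => VT t Ht.1 Ht.2).
move: Hr; rewrite /gap /visible_perimeter /visible_length => Hr.
have : (eps%:E < ((bL - aL) + (bR - aR) + (bB - aB) + (bT - aT) - 2)%:E)%E.
  apply: (lt_le_trans Hr).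
  rewrite EFinB; apply: leeB => //; rewrite !EFinD.
  by apply: leeD => //; apply: leeD => //; apply: leeD.
rewrite lte_fin => H.
by rewrite -ltrBrDr.
Qed.

Lemma vis_no (R : realType) n (x y : 'I_n -> R) rank (i j : 'I_n) p :
  j != i -> (rank i < rank j)%N -> in_square x y j p -> ~ visible x y rank i p.
Proof.
move=> ji rij ins V; have := V j ji ins; rewrite /behind => h.
by have := ltn_trans rij h; rewrite ltnn.
Qed.

Lemma cov_of (R : realType) n (x y : 'I_n -> R) rank (i j : 'I_n) p :
  j != i -> (rank i < rank j)%N -> in_square x y j p -> covered x y rank i p.
Proof. exact: vis_no. Qed.

Arguments vis_no {R n x y rank i j p}.
Arguments cov_of {R n x y rank i j p}.
Arguments reas4 {R n x y rank eps i aL bL aR bR aB bB aT bT}.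

Ltac inside := rewrite /in_square /left_side /right_side /bottom_side /top_side /corner /= !ler_norml; lra.

Ltac lowb ji rij V := rewrite leNgt; apply/negP => Hlt; apply: (vis_no ji rij _ V); inside.
Ltac uppb ji rij V := rewrite leNgt; apply/negP => Hlt; apply: (vis_no ji rij _ V); inside.

Lemma upAB (R : realType) n (x y : 'I_n -> R) rank (d : R) (i m j : 'I_n) :
  0 < d -> d <= 2^-1 -> (forall a b, x a - x b <= 1) -> reasonable x y rank d ->
  y m = y i + d -> (rank m < rank i)%N -> (rank i < rank j)%N -> j != i ->
  y m + d <= y j -> y j <= y i + 1 ->
  standard_bad_square x y rank m.
Proof.
move=> d0 d2 hx Hr ym rmi rij ji yj1 yj2.
have mi : i != m by apply/eqP => e; move: rmi; rewrite e ltnn.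
have jm : j != m by apply/eqP => e; move: rmi; rewrite -e => h; have := ltn_trans rij h; rewrite ltnn.
have rmj : (rank m < rank j)%N by apply: ltn_trans rmi rij.
have := hx i m; have := hx m i; have := hx j m; have := hx m j; have := hx i j; have := hx j i.
move=> h1 h2 h3 h4 h5 h6.
have [xim|xmi] := lerP (x i) (x m); have [xjm|xmj] := lerP (x j) (x m).
- split.
    exists (@Ordinal 4 0 isT), (@Ordinal 4 1 isT); split => //.
    by split; [apply: (cov_of mi rmi) | apply: (cov_of jm rmj)]; inside.
  left => t /andP[t0 t1].
  have [ht|ht] := lerP t (1 - d).
    by apply: (cov_of mi rmi); inside.
  by apply: (cov_of jm rmj); inside.
- exfalso.
  have VL : forall t : R, 0 <= t <= 1 -> visible x y rank m (left_side x y m t) -> 1 - d <= t <= 1.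
    move=> t /andP[t0 t1] V; rewrite t1 andbT; lowb mi rmi V.
  have VR : forall t : R, 0 <= t <= 1 -> visible x y rank m (right_side x y m t) -> 0 <= t <= y j - y m.
    move=> t /andP[t0 t1] V; rewrite t0 /=; uppb jm rmj V.
  have VB : forall t : R, 0 <= t <= 1 -> visible x y rank m (bottom_side x y m t) -> 1 - (x m - x i) <= t <= 1.
    move=> t /andP[t0 t1] V; rewrite t1 andbT; lowb mi rmi V.
  have VT : forall t : R, 0 <= t <= 1 -> visible x y rank m (top_side x y m t) -> 0 <= t <= x j - x m.
    move=> t /andP[t0 t1] V; rewrite t0 /=; uppb jm rmj V.
  have := reas4 Hr VL VR VB VT (ltac:(lra)) (ltac:(lra)) (ltac:(lra)) (ltac:(lra)).
  lra.
- exfalso.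
  have VL : forall t : R, 0 <= t <= 1 -> visible x y rank m (left_side x y m t) -> 0 <= t <= y j - y m.
    move=> t /andP[t0 t1] V; rewrite t0 /=; uppb jm rmj V.
  have VR : forall t : R, 0 <= t <= 1 -> visible x y rank m (right_side x y m t) -> 1 - d <= t <= 1.
    move=> t /andP[t0 t1] V; rewrite t1 andbT; lowb mi rmi V.
  have VB : forall t : R, 0 <= t <= 1 -> visible x y rank m (bottom_side x y m t) -> 0 <= t <= x i - x m.
    move=> t /andP[t0 t1] V; rewrite t0 /=; uppb mi rmi V.
  have VT : forall t : R, 0 <= t <= 1 -> visible x y rank m (top_side x y m t) -> 1 - (x m - x j) <= t <= 1.
    move=> t /andP[t0 t1] V; rewrite t1 andbT; lowb jm rmj V.
  have := reas4 Hr VL VR VB VT (ltac:(lra)) (ltac:(lra)) (ltac:(lra)) (ltac:(lra)).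
  lra.
- split.
    exists (@Ordinal 4 2 isT), (@Ordinal 4 3 isT); split => //.
    by split; [apply: (cov_of mi rmi) | apply: (cov_of jm rmj)]; inside.
  right => t /andP[t0 t1].
  have [ht|ht] := lerP t (1 - d).
    by apply: (cov_of mi rmi); inside.
  by apply: (cov_of jm rmj); inside.
Qed.

Lemma downAB (R : realType) n (x y : 'I_n -> R) rank (d : R) (i m j : 'I_n) :
  0 < d -> d <= 2^-1 -> (forall a b, x a - x b <= 1) -> reasonable x y rank d ->
  y m + d = y i -> (rank m < rank i)%N -> (rank i < rank j)%N -> j != i ->
  y j <= y m - d -> y i - 1 <= y j ->
  standard_bad_square x y rank m.
Proof.
move=> d0 d2 hx Hr ym rmi rij ji yj1 yj2.
have mi : i != m by apply/eqP => e; move: rmi; rewrite e ltnn.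
have jm : j != m by apply/eqP => e; move: rmi; rewrite -e => h; have := ltn_trans rij h; rewrite ltnn.
have rmj : (rank m < rank j)%N by apply: ltn_trans rmi rij.
have := hx i m; have := hx m i; have := hx j m; have := hx m j; have := hx i j; have := hx j i.
move=> h1 h2 h3 h4 h5 h6.
have [xim|xmi] := lerP (x i) (x m); have [xjm|xmj] := lerP (x j) (x m).
- split.
    exists (@Ordinal 4 0 isT), (@Ordinal 4 1 isT); split => //.
    by split; [apply: (cov_of jm rmj) | apply: (cov_of mi rmi)]; inside.
  left => t /andP[t0 t1].
  have [ht|ht] := lerP t d.
    by apply: (cov_of jm rmj); inside.
  by apply: (cov_of mi rmi); inside.
- exfalso.
  have VL : forall t : R, 0 <= t <= 1 -> visible x y rank m (left_side x y m t) -> 0 <= t <= d.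
    move=> t /andP[t0 t1] V; rewrite t0 /=; uppb mi rmi V.
  have VR : forall t : R, 0 <= t <= 1 -> visible x y rank m (right_side x y m t) -> 1 - (y m - y j) <= t <= 1.
    move=> t /andP[t0 t1] V; rewrite t1 andbT; lowb jm rmj V.
  have VB : forall t : R, 0 <= t <= 1 -> visible x y rank m (bottom_side x y m t) -> 0 <= t <= x j - x m.
    move=> t /andP[t0 t1] V; rewrite t0 /=; uppb jm rmj V.
  have VT : forall t : R, 0 <= t <= 1 -> visible x y rank m (top_side x y m t) -> 1 - (x m - x i) <= t <= 1.
    move=> t /andP[t0 t1] V; rewrite t1 andbT; lowb mi rmi V.
  have := reas4 Hr VL VR VB VT (ltac:(lra)) (ltac:(lra)) (ltac:(lra)) (ltac:(lra)).
  lra.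
- exfalso.
  have VL : forall t : R, 0 <= t <= 1 -> visible x y rank m (left_side x y m t) -> 1 - (y m - y j) <= t <= 1.
    move=> t /andP[t0 t1] V; rewrite t1 andbT; lowb jm rmj V.
  have VR : forall t : R, 0 <= t <= 1 -> visible x y rank m (right_side x y m t) -> 0 <= t <= d.
    move=> t /andP[t0 t1] V; rewrite t0 /=; uppb mi rmi V.
  have VB : forall t : R, 0 <= t <= 1 -> visible x y rank m (bottom_side x y m t) -> 1 - (x m - x j) <= t <= 1.
    move=> t /andP[t0 t1] V; rewrite t1 andbT; lowb jm rmj V.
  have VT : forall t : R, 0 <= t <= 1 -> visible x y rank m (top_side x y m t) -> 0 <= t <= x i - x m.
    move=> t /andP[t0 t1] V; rewrite t0 /=; uppb mi rmi V.
  have := reas4 Hr VL VR VB VT (ltac:(lra)) (ltac:(lra)) (ltac:(lra)) (ltac:(lra)).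
  lra.
- split.
    exists (@Ordinal 4 2 isT), (@Ordinal 4 3 isT); split => //.
    by split; [apply: (cov_of jm rmj) | apply: (cov_of mi rmi)]; inside.
  right => t /andP[t0 t1].
  have [ht|ht] := lerP t d.
    by apply: (cov_of jm rmj); inside.
  by apply: (cov_of mi rmi); inside.
Qed.

Lemma top2 (R : realType) n (x y : 'I_n -> R) rank (d : R) (i m ja jb : 'I_n) :
  0 < d -> d <= 2^-1 -> (forall a b, x a - x b <= 1) -> reasonable x y rank d ->
  y m = y i + d -> (rank i < rank m)%N -> m != i ->
  ja != i -> (rank i < rank ja)%N -> y i <= y ja <= y i + 1 -> x ja <= x i ->
  jb != i -> (rank i < rank jb)%N -> y i <= y jb <= y i + 1 -> x i <= x jb ->
  False.
Proof.
move=> d0 d2 hx Hr ym rim mi jai rija /andP[ya1 ya2] xa jbi rijb /andP[yb1 yb2] xb.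
have := hx i m; have := hx m i; have := hx ja m; have := hx m ja; have := hx jb m; have := hx m jb.
move=> h1 h2 h3 h4 h5 h6.
have [xmi|xim] := lerP (x m) (x i).
- have VL : forall t : R, 0 <= t <= 1 -> visible x y rank i (left_side x y i t) -> 0 <= t <= d.
    move=> t /andP[t0 t1] V; rewrite t0 /=; uppb mi rim V.
  have VR : forall t : R, 0 <= t <= 1 -> visible x y rank i (right_side x y i t) -> 0 <= t <= 1.
    by move=> t /andP[t0 t1] V; rewrite t0 t1.
  have VB : forall t : R, 0 <= t <= 1 -> visible x y rank i (bottom_side x y i t) -> 0 <= t <= 1.
    by move=> t /andP[t0 t1] V; rewrite t0 t1.
  have VT : forall t : R, 0 <= t <= 1 -> visible x y rank i (top_side x y i t) -> 0 <= t <= 0.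
    move=> t /andP[t0 t1] V; exfalso.
    have [ht|ht] := lerP t (1 - (x i - x m)).
      by apply: (vis_no mi rim _ V); inside.
    by apply: (vis_no jbi rijb _ V); inside.
  have := reas4 Hr VL VR VB VT (ltac:(lra)) (ltac:(lra)) (ltac:(lra)) (ltac:(lra)).
  lra.
- have VL : forall t : R, 0 <= t <= 1 -> visible x y rank i (left_side x y i t) -> 0 <= t <= 1.
    by move=> t /andP[t0 t1] V; rewrite t0 t1.
  have VR : forall t : R, 0 <= t <= 1 -> visible x y rank i (right_side x y i t) -> 0 <= t <= d.
    move=> t /andP[t0 t1] V; rewrite t0 /=; uppb mi rim V.
  have VB : forall t : R, 0 <= t <= 1 -> visible x y rank i (bottom_side x y i t) -> 0 <= t <= 1.
    by move=> t /andP[t0 t1] V; rewrite t0 t1.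
  have VT : forall t : R, 0 <= t <= 1 -> visible x y rank i (top_side x y i t) -> 0 <= t <= 0.
    move=> t /andP[t0 t1] V; exfalso.
    have [ht|ht] := lerP (x m - x i) t.
      by apply: (vis_no mi rim _ V); inside.
    by apply: (vis_no jai rija _ V); inside.
  have := reas4 Hr VL VR VB VT (ltac:(lra)) (ltac:(lra)) (ltac:(lra)) (ltac:(lra)).
  lra.
Qed.

Lemma bot2 (R : realType) n (x y : 'I_n -> R) rank (d : R) (i m ja jb : 'I_n) :
  0 < d -> d <= 2^-1 -> (forall a b, x a - x b <= 1) -> reasonable x y rank d ->
  y m + d = y i -> (rank i < rank m)%N -> m != i ->
  ja != i -> (rank i < rank ja)%N -> y i - 1 <= y ja <= y i -> x ja <= x i ->
  jb != i -> (rank i < rank jb)%N -> y i - 1 <= y jb <= y i -> x i <= x jb ->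
  False.
Proof.
move=> d0 d2 hx Hr ym rim mi jai rija /andP[ya1 ya2] xa jbi rijb /andP[yb1 yb2] xb.
have := hx i m; have := hx m i; have := hx ja m; have := hx m ja; have := hx jb m; have := hx m jb.
move=> h1 h2 h3 h4 h5 h6.
have [xmi|xim] := lerP (x m) (x i).
- have VL : forall t : R, 0 <= t <= 1 -> visible x y rank i (left_side x y i t) -> 1 - d <= t <= 1.
    move=> t /andP[t0 t1] V; rewrite t1 andbT; lowb mi rim V.
  have VR : forall t : R, 0 <= t <= 1 -> visible x y rank i (right_side x y i t) -> 0 <= t <= 1.
    by move=> t /andP[t0 t1] V; rewrite t0 t1.
  have VT : forall t : R, 0 <= t <= 1 -> visible x y rank i (top_side x y i t) -> 0 <= t <= 1.
    by move=> t /andP[t0 t1] V; rewrite t0 t1.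
  have VB : forall t : R, 0 <= t <= 1 -> visible x y rank i (bottom_side x y i t) -> 0 <= t <= 0.
    move=> t /andP[t0 t1] V; exfalso.
    have [ht|ht] := lerP t (1 - (x i - x m)).
      by apply: (vis_no mi rim _ V); inside.
    by apply: (vis_no jbi rijb _ V); inside.
  have := reas4 Hr VL VR VB VT (ltac:(lra)) (ltac:(lra)) (ltac:(lra)) (ltac:(lra)).
  lra.
- have VL : forall t : R, 0 <= t <= 1 -> visible x y rank i (left_side x y i t) -> 0 <= t <= 1.
    by move=> t /andP[t0 t1] V; rewrite t0 t1.
  have VR : forall t : R, 0 <= t <= 1 -> visible x y rank i (right_side x y i t) -> 1 - d <= t <= 1.
    move=> t /andP[t0 t1] V; rewrite t1 andbT; lowb mi rim V.
  have VT : forall t : R, 0 <= t <= 1 -> visible x y rank i (top_side x y i t) -> 0 <= t <= 1.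
    by move=> t /andP[t0 t1] V; rewrite t0 t1.
  have VB : forall t : R, 0 <= t <= 1 -> visible x y rank i (bottom_side x y i t) -> 0 <= t <= 0.
    move=> t /andP[t0 t1] V; exfalso.
    have [ht|ht] := lerP (x m - x i) t.
      by apply: (vis_no mi rim _ V); inside.
    by apply: (vis_no jai rija _ V); inside.
  have := reas4 Hr VL VR VB VT (ltac:(lra)) (ltac:(lra)) (ltac:(lra)) (ltac:(lra)).
  lra.
Qed.

Lemma mixed (R : realType) n (x y : 'I_n -> R) rank (d : R) (i mu md : 'I_n) :
  0 < d -> d <= 2^-1 -> (forall a b, x a - x b <= 1) -> reasonable x y rank d ->
  y mu = y i + d -> (rank i < rank mu)%N -> mu != i ->
  y md + d = y i -> (rank i < rank md)%N -> md != i ->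
  ~ (forall t : R, 0 <= t <= 1 -> covered x y rank i (left_side x y i t)) ->
  ~ (forall t : R, 0 <= t <= 1 -> covered x y rank i (right_side x y i t)) ->
  False.
Proof.
move=> d0 d2 hx Hr yu riu ui yd rid di NL NR.
have := hx i mu; have := hx mu i; have := hx md mu; have := hx mu md; have := hx i md; have := hx md i.
move=> h1 h2 h3 h4 h5 h6.
have [xui|xiu] := lerP (x mu) (x i); have [xdi|xid] := lerP (x md) (x i).
- apply: NL => t /andP[t0 t1].
  have [ht|ht] := lerP t (1 - d).
    by apply: (cov_of di rid); inside.
  by apply: (cov_of ui riu); inside.
- have VL : forall t : R, 0 <= t <= 1 -> visible x y rank i (left_side x y i t) -> 0 <= t <= d.
    move=> t /andP[t0 t1] V; rewrite t0 /=; uppb ui riu V.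
  have VR : forall t : R, 0 <= t <= 1 -> visible x y rank i (right_side x y i t) -> 1 - d <= t <= 1.
    move=> t /andP[t0 t1] V; rewrite t1 andbT; lowb di rid V.
  have VB : forall t : R, 0 <= t <= 1 -> visible x y rank i (bottom_side x y i t) -> 0 <= t <= x md - x i.
    move=> t /andP[t0 t1] V; rewrite t0 /=; uppb di rid V.
  have VT : forall t : R, 0 <= t <= 1 -> visible x y rank i (top_side x y i t) -> 1 - (x i - x mu) <= t <= 1.
    move=> t /andP[t0 t1] V; rewrite t1 andbT; lowb ui riu V.
  have := reas4 Hr VL VR VB VT (ltac:(lra)) (ltac:(lra)) (ltac:(lra)) (ltac:(lra)).
  lra.
- have VL : forall t : R, 0 <= t <= 1 -> visible x y rank i (left_side x y i t) -> 1 - d <= t <= 1.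
    move=> t /andP[t0 t1] V; rewrite t1 andbT; lowb di rid V.
  have VR : forall t : R, 0 <= t <= 1 -> visible x y rank i (right_side x y i t) -> 0 <= t <= d.
    move=> t /andP[t0 t1] V; rewrite t0 /=; uppb ui riu V.
  have VB : forall t : R, 0 <= t <= 1 -> visible x y rank i (bottom_side x y i t) -> 1 - (x i - x md) <= t <= 1.
    move=> t /andP[t0 t1] V; rewrite t1 andbT; lowb di rid V.
  have VT : forall t : R, 0 <= t <= 1 -> visible x y rank i (top_side x y i t) -> 0 <= t <= x mu - x i.
    move=> t /andP[t0 t1] V; rewrite t0 /=; uppb ui riu V.
  have := reas4 Hr VL VR VB VT (ltac:(lra)) (ltac:(lra)) (ltac:(lra)) (ltac:(lra)).
  lra.
- apply: NR => t /andP[t0 t1].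
  have [ht|ht] := lerP t (1 - d).
    by apply: (cov_of di rid); inside.
  by apply: (cov_of ui riu); inside.
Qed.

Lemma ystep (R : realType) n (y : 'I_n -> R) (d : R)
  (hs : forall i j : 'I_n, val j = (val i).+1 -> y j - y i = d) :
  forall p (a b : 'I_n), val b = (val a + p)%N -> y b - y a = p%:R * d.
Proof.
elim=> [|p IH] a b hb.
  have -> : b = a by apply: val_inj; rewrite /= hb addn0.
  by rewrite subrr mul0r.
have hb' : (nat_of_ord b = nat_of_ord a + p.+1)%N by exact: hb.
have hc : (val a + p < n)%N by have := ltn_ord b; simpl; lia.
have h1 := IH a (Ordinal hc) erefl.
have h2 := hs (Ordinal hc) b ltac:(by rewrite hb addnS).
have -> : y b - y a = (y b - y (Ordinal hc)) + (y (Ordinal hc) - y a) by ring.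
by rewrite h1 h2 -addn1 natrD mulrDl mul1r addrC.
Qed.

Lemma ylt (R : realType) n (y : 'I_n -> R) (d : R) :
  0 < d -> (forall i j : 'I_n, val j = (val i).+1 -> y j - y i = d) ->
  forall a b : 'I_n, (val a < val b)%N -> y a + d <= y b.
Proof.
move=> d0 hs a b ab.
have ab' : (nat_of_ord a < nat_of_ord b)%N by exact: ab.
have := @ystep R n y d hs (val b - val a)%N a b ltac:(lia).
case E: (val b - val a)%N => [|q]; first by lia.
rewrite -addn1 natrD mulrDl mul1r => h.
have : 0 <= q%:R * d by apply: mulr_ge0 => //; apply: ltW.
lra.
Qed.

Lemma cov_ex (R : realType) n (x y : 'I_n -> R) rank (i : 'I_n) p :
  injective rank -> covered x y rank i p ->
  exists j, [/\ j != i, (rank i < rank j)%N & in_square x y j p].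
Proof.
move=> inj C; apply: contrapT => H; apply: C => j ji ins; rewrite /behind.
case: (ltngtP (rank j) (rank i)) => // h.
- by exfalso; apply: H; exists j; split.
- by move/inj: h => e; move: ji; rewrite e eqxx.
Qed.

Lemma corner_info (R : realType) n (x y : 'I_n -> R) (i j : 'I_n) (c : 'I_4) :
  in_square x y j (corner x y i c) ->
  (odd c -> y i <= y j <= y i + 1) /\ (~~ odd c -> y i - 1 <= y j <= y i) /\
  ((c < 2)%N -> x j <= x i) /\ (~~ (c < 2)%N -> x i <= x j).
Proof.
rewrite /in_square /corner /=; case: (c < 2)%N; case: (odd c);
  rewrite !ler_norml => -[/andP[h1 h2] /andP[h3 h4]]; split; (try split); (try split); move=> //= _; lra.
Qed.

Arguments ylt {R n y d}.
Arguments upAB {R n x y rank d i m j}.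
Arguments downAB {R n x y rank d i m j}.
Arguments top2 {R n x y rank d i m ja jb}.
Arguments bot2 {R n x y rank d i m ja jb}.
Arguments mixed {R n x y rank d i mu md}.

Lemma topcase (R : realType) n (x y : 'I_n -> R) rank (d : R) (i j : 'I_n) :
  0 < d -> d <= 2^-1 -> (forall a b, x a - x b <= 1) -> reasonable x y rank d ->
  (forall a b : 'I_n, val b = (val a).+1 -> y b - y a = d) -> injective rank ->
  j != i -> (rank i < rank j)%N -> y i <= y j <= y i + 1 ->
  exists m : 'I_n, [/\ val m = (val i).+1, y m = y i + d &
    (standard_bad_square x y rank m \/ ((rank i < rank m)%N /\ m != i))].
Proof.
move=> d0 d2 hx Hr hs inj ji rij /andP[y1 y2].
have ij : (val i < val j)%N.
  case: (ltngtP (val i) (val j)) => // h.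
  - by have := ylt d0 hs _ _ h; lra.
  - by move/val_inj: h => e; move: ji; rewrite e eqxx.
have hm : ((val i).+1 < n)%N by exact: leq_ltn_trans ij (ltn_ord j).
pose m := Ordinal hm.
have ym : y m = y i + d by have := hs i m erefl; lra.
exists m; split => //.
case: (ltngtP (rank m) (rank i)) => h.
- left.
  have jm : j != m.
    by apply/eqP => e; move: h; rewrite -e => h'; have := ltn_trans rij h'; rewrite ltnn.
  have mj : (val m < val j)%N.
    rewrite ltn_neqAle ij andbT; apply: contra jm => /eqP e; apply/eqP/val_inj; done.
  have hmj := ylt d0 hs _ _ mj.
  exact: (upAB d0 d2 hx Hr ym h rij ji hmj y2).
- by right; split => //; apply/eqP => e; move: h; rewrite e ltnn.
- move/inj: h => e; exfalso.
  have : val m = val i by rewrite e.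
  rewrite /=; lia.
Qed.

Lemma botcase (R : realType) n (x y : 'I_n -> R) rank (d : R) (i j : 'I_n) :
  0 < d -> d <= 2^-1 -> (forall a b, x a - x b <= 1) -> reasonable x y rank d ->
  (forall a b : 'I_n, val b = (val a).+1 -> y b - y a = d) -> injective rank ->
  j != i -> (rank i < rank j)%N -> y i - 1 <= y j <= y i ->
  exists m : 'I_n, [/\ (val m).+1 = val i, y m + d = y i &
    (standard_bad_square x y rank m \/ ((rank i < rank m)%N /\ m != i))].
Proof.
move=> d0 d2 hx Hr hs inj ji rij /andP[y1 y2].
have ji' : (val j < val i)%N.
  case: (ltngtP (val j) (val i)) => // h.
  - by have := ylt d0 hs _ _ h; lra.
  - by move/val_inj: h => e; move: ji; rewrite e eqxx.
have ji2 : (nat_of_ord j < nat_of_ord i)%N := ji'.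
have hm : ((val i).-1 < n)%N by have := ltn_ord i; simpl; lia.
pose m := Ordinal hm.
have vm : (val m).+1 = val i by simpl; lia.
have ym : y m + d = y i by have := hs m i (esym vm); lra.
exists m; split => //.
case: (ltngtP (rank m) (rank i)) => h.
- left.
  have jm : j != m.
    by apply/eqP => e; move: h; rewrite -e => h'; have := ltn_trans rij h'; rewrite ltnn.
  have jm' : (val j < val m)%N.
    have : val j != val m by apply: contra jm => /eqP e; apply/eqP/val_inj.
    have : (nat_of_ord j <= nat_of_ord m)%N by simpl; lia.
    move=> h1 h2; rewrite ltn_neqAle h1 andbT; exact: h2.
  have hmj := ylt d0 hs _ _ jm'.
  exact: (downAB d0 d2 hx Hr ym h rij ji ltac:(lra) y1).
- by right; split => //; apply/eqP => e; move: h; rewrite e ltnn.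
- move/inj: h => e; exfalso.
  have : val m = val i by rewrite e.
  move: vm => /=; lia.
Qed.

Lemma pairlem (c1 c2 : 'I_4) : c1 != c2 -> odd c1 = odd c2 -> (c1 < 2)%N = ~~ (c2 < 2)%N.
Proof. by case: c1 => [[|[|[|[|?]]]] ?]; case: c2 => [[|[|[|[|?]]]] ?]. Qed.

Arguments cov_ex {R n x y rank i p}.
Arguments corner_info {R n x y i j c}.
Arguments topcase {R n x y rank d i j}.
Arguments botcase {R n x y rank d i j}.

Theorem lemma12 (R : realType) (w h : R) (k n : nat)
  (y x : 'I_n -> R) (rank : 'I_n -> nat) :
  1 < w <= 2 -> 1 < h -> (2 <= k)%N ->
  (forall i : 'I_n, 2^-1 <= y i <= h - 2^-1) ->
  (forall i j : 'I_n, val j = (val i).+1 -> y j - y i = k%:R^-1) ->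
  (forall i : 'I_n, 2^-1 <= x i <= w - 2^-1) ->
  injective rank ->
  reasonable x y rank k%:R^-1 ->
  forall i : 'I_n,
    bad_square x y rank i -> ~ standard_bad_square x y rank i ->
    exists j : 'I_n,
      ((val j).+1 = val i \/ val j = (val i).+1) /\ standard_bad_square x y rank j.
Proof.
move=> /andP[w1 w2] hh hk hy hs hxb inj Hr i bad nstd.
set d := k%:R^-1 in hs Hr.
have k0 : (0 < k)%N by lia.
have d0 : 0 < d by rewrite /d invr_gt0 ltr0n.
have d2 : d <= 2^-1.
  rewrite /d lef_pV2 ?posrE ?ltr0n //.
  by rewrite -[2]/(2%:R) ler_nat.
have hx : forall a b, x a - x b <= 1.
  by move=> a b; have := hxb a; have := hxb b; move=> /andP[? ?] /andP[? ?]; lra.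
have NL : ~ (forall t : R, 0 <= t <= 1 -> covered x y rank i (left_side x y i t)).
  by move=> HL; apply: nstd; split => //; left.
have NR : ~ (forall t : R, 0 <= t <= 1 -> covered x y rank i (right_side x y i t)).
  by move=> HR; apply: nstd; split => //; right.
case: bad => c1 [c2 [c12 [C1 C2]]].
have [j1 [j1i r1 s1]] := cov_ex inj C1.
have [j2 [j2i r2 s2]] := cov_ex inj C2.
have [a1 [b1 [e1 f1]]] := corner_info s1.
have [a2 [b2 [e2 f2]]] := corner_info s2.
case o1: (odd c1); case o2: (odd c2).
- have [m [vm ym [Hs|[rim mi]]]] := topcase d0 d2 hx Hr hs inj j1i r1 (a1 o1).
    by exists m; split => //; right.
  have L := pairlem _ _ c12 (etrans o1 (esym o2)).
  case l1: (c1 < 2)%N; move: L; rewrite l1 => L.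
  + exfalso; apply: (top2 d0 d2 hx Hr ym rim mi j1i r1 (a1 o1) (e1 l1) j2i r2 (a2 o2)).
    by apply: f2; rewrite -L.
  + exfalso; apply: (top2 d0 d2 hx Hr ym rim mi j2i r2 (a2 o2) _ j1i r1 (a1 o1) (f1 _)).
      by apply: e2; apply/negPn; rewrite -L.
    by rewrite l1.
- have [mu [vu yu [Hs|[riu ui]]]] := topcase d0 d2 hx Hr hs inj j1i r1 (a1 o1).
    by exists mu; split => //; right.
  have [md [vd yd [Hs|[rid di]]]] := botcase d0 d2 hx Hr hs inj j2i r2 (b2 (negbT o2)).
    by exists md; split => //; left.
  by exfalso; apply: (mixed d0 d2 hx Hr yu riu ui yd rid di NL NR).
- have [mu [vu yu [Hs|[riu ui]]]] := topcase d0 d2 hx Hr hs inj j2i r2 (a2 o2).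
    by exists mu; split => //; right.
  have [md [vd yd [Hs|[rid di]]]] := botcase d0 d2 hx Hr hs inj j1i r1 (b1 (negbT o1)).
    by exists md; split => //; left.
  by exfalso; apply: (mixed d0 d2 hx Hr yu riu ui yd rid di NL NR).
- have [m [vm ym [Hs|[rim mi]]]] := botcase d0 d2 hx Hr hs inj j1i r1 (b1 (negbT o1)).
    by exists m; split => //; left.
  have L := pairlem _ _ c12 (etrans o1 (esym o2)).
  case l1: (c1 < 2)%N; move: L; rewrite l1 => L.
  + exfalso; apply: (bot2 d0 d2 hx Hr ym rim mi j1i r1 (b1 (negbT o1)) (e1 l1) j2i r2 (b2 (negbT o2))).
    by apply: f2; rewrite -L.
  + exfalso; apply: (bot2 d0 d2 hx Hr ym rim mi j2i r2 (b2 (negbT o2)) _ j1i r1 (b1 (negbT o1)) (f1 _)).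
      by apply: e2; apply/negPn; rewrite -L.
    by rewrite l1.
Qed.
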